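(* Let $\mu$ be a distribution over $\{0,1\}^V$ and $\theta\in(0,1)$. For every vertex $i\in V$ and every distribution $\nu$ on $\Omega(\pi)$ such that the function $\sigma\mapsto\nu(\sigma)/\pi(\sigma)$ is increasing on $\Omega(\pi)$, we have $\nu P^i_{\pi\text{-GD}}\preceq_{\mathrm{sd}}\nu P^i_{\mathrm{s\text{-}GD}}$; that is, $P^i_{\pi\text{-GD}}\preceq_{\mathrm{mc}}P^i_{\mathrm{s\text{-}GD}}$.
   Context: Tilted $(\theta*\mu)(\sigma)\propto\mu(\sigma)\theta^{\|\sigma\|_1}$. $\mathsf{lift}:\{0,1\}^V\to\{0,1,\star\}^V$ random: independently per coordinate $0\mapsto0$, $1\mapsto\star$ w.p. $1-\theta$, $1\mapsto1$ w.p. $\theta$; $\mathsf{contr}$: $0\mapsto0$, $1,\star\mapsto1$. $\pi$: law of $\mathsf{lift}(X)$, $X\sim\mu$, support $\Omega(\pi)$. $P^i_{\pi\text{-GD}}$: resample $X_i$ from $\pi$ conditioned on $X_{V\setminus\{i\}}$. $P^i_{\mathrm{s\text{-}GD}}$: if $X_i=\star$ keep it; otherwise resample $X_i\in\{0,1\}$ from $(\theta*\mu)_i^{\sigma_{V\setminus\{i\}}}$ with $\sigma=\mathsf{contr}(X)$. Order $0<1<\star$, coordinatewise partial order on $\{0,1,\star\}^V$; $f$ increasing means $X\preceq Y\Rightarrow f(X)\le f(Y)$; $\nu\preceq_{\mathrm{sd}}\nu'$ iff $\mathbb E_\nu f\le\mathbb E_{\nu'}f$ for every increasing $f\ge0$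 (equivalently, a monotone coupling exists). $P\preceq_{\mathrm{mc}}Q$ means $\nu P\preceq_{\mathrm{sd}}\nu Q$ for all $\nu$ with $\nu/\pi$ increasing. *)

(* Defs.v *)
From HB Require Import structures.
From mathcomp Require Import all_boot all_order all_algebra.
From mathcomp Require Import reals.
Set Implicit Arguments. Unset Strict Implicit. Unset Printing Implicit Defensive.
Import Order.TTheory GRing.Theory Num.Theory.
Local Open Scope ring_scope.

(* Spins {0,1,star} are encoded as 'I_3 : 0 <-> 0, 1 <-> 1, 2 <-> star.
   The order 0 < 1 < star is the natural order on the values. *)
Definition sZero : 'I_3 := @Ordinal 3 0 isT.
Definition sOne  : 'I_3 := @Ordinal 3 1 isT.
Definition sStar : 'I_3 := @Ordinal 3 2 isT.

Section Defs.
Variables (R : realType) (V : finType).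

Definition bconf := {ffun V -> bool}.
Definition sconf := {ffun V -> 'I_3}.

Definition sle (X Y : sconf) : Prop := forall v, (nat_of_ord (X v) <= nat_of_ord (Y v))%N.

Definition is_distr (T : finType) (p : {ffun T -> R}) : Prop :=
  (forall x, 0 <= p x) /\ \sum_x p x = 1.

Definition contr (X : sconf) : bconf := [ffun v => X v != sZero].

(* probability that lift maps a bit b to the spin c *)
Definition lift_prob (theta : R) (b : bool) (c : 'I_3) : R :=
  if b then (if c == sOne then theta else if c == sStar then 1 - theta else 0)
  else (if c == sZero then 1 else 0).

(* pi = law of lift(X), X ~ mu *)
Definition piL (mu : {ffun bconf -> R}) (theta : R) (X : sconf) : R :=
  \sum_(s : bconf) mu s * \prod_(v : V) lift_prob theta (s v) (X v).

Definition ones (s : bconf) : nat := #|[set v | s v]|.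

Definition tilt (mu : {ffun bconf -> R}) (theta : R) (s : bconf) : R :=
  mu s * theta ^+ ones s / \sum_(t : bconf) mu t * theta ^+ ones t.

Definition updb (s : bconf) (i : V) (b : bool) : bconf :=
  [ffun v => if v == i then b else s v].
Definition upds (X : sconf) (i : V) (c : 'I_3) : sconf :=
  [ffun v => if v == i then c else X v].

Definition tilt_cond (mu : {ffun bconf -> R}) (theta : R) (i : V) (s : bconf)
  (b : bool) : R :=
  tilt mu theta (updb s i b) / \sum_(b' : bool) tilt mu theta (updb s i b').

Definition agree_off (i : V) (X Y : sconf) : bool :=
  [forall v, (v != i) ==> (Y v == X v)].

Definition P_piGD (mu : {ffun bconf -> R}) (theta : R) (i : V) (X Y : sconf) : R :=
  if agree_off i X Y
  then piL mu theta Y / \sum_(c : 'I_3) piL mu theta (upds X i c)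
  else 0.

Definition P_sGD (mu : {ffun bconf -> R}) (theta : R) (i : V) (X Y : sconf) : R :=
  if X i == sStar then (Y == X)%:R
  else if agree_off i X Y && (Y i != sStar)
       then tilt_cond mu theta i (contr X) (Y i != sZero)
       else 0.

Definition push (nu : {ffun sconf -> R}) (P : sconf -> sconf -> R) (Y : sconf) : R :=
  \sum_(X : sconf) nu X * P X Y.

Definition sd_le (nu nu' : sconf -> R) : Prop :=
  forall f : sconf -> R, (forall X, 0 <= f X) ->
    (forall X Y, sle X Y -> f X <= f Y) ->
    \sum_X nu X * f X <= \sum_X nu' X * f X.

End Defs.

(* Main.v *)
Require Import Defs.
From HB Require Import structures.
From mathcomp Require Import all_boot all_order all_algebra.
From mathcomp Require Import reals.
From mathcomp Require Import ring lra.
Set Implicit Arguments. Unset Strict Implicit. Unset Printing Implicit Defensive.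
Import Order.TTheory GRing.Theory Num.Theory.
Local Open Scope ring_scope.

Lemma eqle (R : realType) (x y : R) : x = y -> x <= y. Proof. by move->. Qed.

Lemma alg (R : realType) (a0 a1 a2 p0 p1 p2 f0 f1 f2 : R) :
 0<=a0 -> 0<=a1 -> 0<=a2 -> 0<=p0 -> 0<=p1 -> 0<=p2 ->
 (p0 = 0 -> a0 = 0) -> (p1 = 0 -> a1 = 0) -> (p2 = 0 -> a2 = 0) ->
 (0 < p0 -> 0 < p2 -> a0/p0 <= a2/p2) -> (0 < p1 -> 0 < p2 -> a1/p1 <= a2/p2) ->
 f0 <= f2 -> f1 <= f2 ->
 a0 * (p0/(p0+p1+p2)*f0 + p1/(p0+p1+p2)*f1 + p2/(p0+p1+p2)*f2)
 + a1 * (p0/(p0+p1+p2)*f0 + p1/(p0+p1+p2)*f1 + p2/(p0+p1+p2)*f2)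
 + a2 * (p0/(p0+p1+p2)*f0 + p1/(p0+p1+p2)*f1 + p2/(p0+p1+p2)*f2)
 <= a0 * (p0/(p0+p1)*f0 + p1/(p0+p1)*f1) + a1 * (p0/(p0+p1)*f0 + p1/(p0+p1)*f1) + a2 * f2.
Proof.
move=> ha0 ha1 ha2 hp0 hp1 hp2 z0 z1 z2 r0 r1 hf0 hf1.
have cr : forall a p : R, 0 <= p -> (p = 0 -> a = 0) -> (0 < p -> 0 < p2 -> a/p <= a2/p2) ->
    a * p2 <= a2 * p.
  move=> a p hp zp rp.
  have [e|pnz] := eqVneq p 0; first by rewrite (zp e) e mul0r mulr0.
  have [e2|p2nz] := eqVneq p2 0; first by rewrite (z2 e2) e2 mul0r mulr0.
  have pp : 0 < p by rewrite lt_def pnz.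
  have pp2 : 0 < p2 by rewrite lt_def p2nz.
  have := rp pp pp2; rewrite -(ler_pM2r (mulr_gt0 pp pp2)).
  by rewrite !mulrA divfK // [X in _ <= X]mulrAC divfK.
have c0 := cr _ _ hp0 z0 r0.
have c1 := cr _ _ hp1 z1 r1.
have [e2|p2nz] := eqVneq p2 0.
  rewrite (z2 e2) e2 addr0; apply: eqle; ring.
have pp2 : 0 < p2 by rewrite lt_def p2nz.
have [eS|Snz] := eqVneq (p0 + p1) 0.
  have e0 : p0 = 0 by lra.
  have e1 : p1 = 0 by lra.
  rewrite (z0 e0) (z1 e1) e0 e1 !add0r divff //; apply: eqle; ring.
have pS : 0 < p0 + p1 by rewrite lt_def Snz addr_ge0.
have pP : 0 < p0 + p1 + p2 by rewrite addr_gt0.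
set S := p0 + p1. set P := S + p2.
have eL : a0 * (p0/P*f0 + p1/P*f1 + p2/P*f2) + a1 * (p0/P*f0 + p1/P*f1 + p2/P*f2)
   + a2 * (p0/P*f0 + p1/P*f1 + p2/P*f2) = ((a0+a1+a2)*(p0*f0+p1*f1+p2*f2)) / P by ring.
have eR : a0 * (p0/S*f0 + p1/S*f1) + a1 * (p0/S*f0 + p1/S*f1) + a2 * f2 =
   ((a0+a1)*(p0*f0+p1*f1) + a2*f2*S) / S.
  by field; rewrite Snz.
rewrite eL eR ler_pdivrMr // mulrAC ler_pdivlMr //.
have h1 : 0 <= f2 * S - (p0*f0+p1*f1).
  have t0 : 0 <= f2 - f0 by rewrite subr_ge0.
  have t1 : 0 <= f2 - f1 by rewrite subr_ge0.
  have := mulr_ge0 hp0 t0; have := mulr_ge0 hp1 t1.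
  rewrite /S; lra.
have h2 : 0 <= a2 * S - (a0+a1) * p2 by rewrite /S; lra.
have := mulr_ge0 h1 h2; rewrite /P /S; lra.
Qed.

Section Proof.
Variables (R : realType) (V : finType).
Implicit Types (X Y : sconf V).

Lemma sum3 (F : 'I_3 -> R) : \sum_c F c = F sZero + F sOne + F sStar.
Proof.
rewrite !big_ord_recr big_ord0 /= add0r.
by congr (_ + _ + _); congr F; apply: val_inj.
Qed.

Lemma upds_i X i c : upds X i c i = c.
Proof. by rewrite ffunE eqxx. Qed.

Lemma upds_upds X i c c' : upds (upds X i c) i c' = upds X i c'.
Proof. by apply/ffunP=> v; rewrite !ffunE; case: eqP. Qed.

Lemma agree_offE i X Y : agree_off i X Y = (Y == upds X i (Y i)).
Proof.
apply/idP/eqP.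
- move/forallP=> H; apply/ffunP=> v; rewrite ffunE; case: eqP=> [->//|/eqP ne].
  by move/implyP: (H v) => /(_ ne)/eqP.
- move=> E; apply/forallP=> v; apply/implyP=> ne.
  by rewrite E ffunE (negbTE ne).
Qed.

Lemma agree_offC i X Y : agree_off i X Y = agree_off i Y X.
Proof.
by apply/forallP/forallP => H v; apply/implyP => ne; rewrite eq_sym; exact: (implyP (H v) ne).
Qed.

Lemma sum_fiber i X (G : sconf V -> R) :
  \sum_Y (if agree_off i X Y then G Y else 0) = \sum_c G (upds X i c).
Proof.
transitivity (\sum_Y \sum_c (if Y == upds X i c then G Y else 0)).
  apply: eq_bigr => Y _; rewrite agree_offE (bigD1 (Y i)) //= big1 ?addr0 //.
  move=> c ne; case: eqP => // E; move: ne; by rewrite E upds_i eqxx.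
rewrite exchange_big /=; apply: eq_bigr => c _.
by rewrite (bigD1 (upds X i c)) //= eqxx big1 ?addr0 // => Y /negbTE ->.
Qed.

Lemma sum_fiber_all i (H : sconf V -> R) :
  \sum_X \sum_c H (upds X i c) = 3%:R * \sum_X H X.
Proof.
transitivity (\sum_X \sum_Y (if agree_off i X Y then H Y else 0)).
  by apply: eq_bigr => X _; rewrite sum_fiber.
rewrite exchange_big /= mulr_sumr; apply: eq_bigr => Y _.
transitivity (\sum_X (if agree_off i Y X then 1 else 0) * H Y).
  by apply: eq_bigr => X _; rewrite agree_offC; case: ifP; rewrite ?mul1r ?mul0r.
rewrite -big_distrl /= (sum_fiber i Y (fun _ => 1)) sum3.
by congr (_ * _); lra.
Qed.


Definition w (theta : R) (c : 'I_3) := lift_prob theta (c != sZero) c.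

Lemma lift_prob0 (theta : R) b c : b != (c != sZero) -> lift_prob theta b c = 0.
Proof. by case: b; case: c => [[|[|[|n]]] Hc]. Qed.

Lemma piLE (mu : {ffun bconf V -> R}) (theta : R) X :
  piL mu theta X = mu (contr X) * \prod_v w theta (X v).
Proof.
rewrite /piL (bigD1 (contr X)) //= [X in _ + X]big1 ?addr0.
  by congr (_ * _); apply: eq_bigr => v _; rewrite /w ffunE.
move=> s ne; have /existsP [v hv] : [exists v, s v != contr X v].
  apply: contraR ne => /existsPn H; apply/eqP/ffunP => v; apply/eqP.
  by move: (H v); rewrite negbK.
rewrite (bigD1 v) //= lift_prob0 ?mul0r ?mulr0 //; by move: hv; rewrite ffunE.
Qed.

Lemma contr_upds X i c : contr (upds X i c) = updb (contr X) i (c != sZero).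
Proof. by apply/ffunP => v; rewrite !ffunE; case: (v == i). Qed.

Lemma updb_updb (s : bconf V) i b b' : updb (updb s i b) i b' = updb s i b'.
Proof. by apply/ffunP=> v; rewrite !ffunE; case: eqP. Qed.

Lemma piL_upds (mu : {ffun bconf V -> R}) (theta : R) X i c : piL mu theta (upds X i c) =
  mu (updb (contr X) i (c != sZero)) * (w theta c * \prod_(v | v != i) w theta (X v)).
Proof.
rewrite piLE contr_upds (bigD1 i) //= upds_i; congr (_ * (_ * _)).
by apply: eq_bigr => v ne; rewrite ffunE (negbTE ne).
Qed.

Lemma w0 (theta : R) : w theta sZero = 1. Proof. by []. Qed.
Lemma w1 (theta : R) : w theta sOne = theta. Proof. by []. Qed.
Lemma w2 (theta : R) : w theta sStar = 1 - theta. Proof. by []. Qed.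

Lemma w_gt0 (theta : R) c : 0 < theta < 1 -> 0 < w theta c.
Proof.
case/andP=> h0 h1; case: c => [[|[|[|n]]] Hc] //; rewrite /w /lift_prob /=. by rewrite subr_gt0. Qed.

Lemma ones_upd (s : bconf V) i : ones (updb s i true) = (ones (updb s i false)).+1.
Proof.
rewrite /ones; have -> : [set v | updb s i true v] = i |: [set v | updb s i false v].
  by apply/setP => v; rewrite !inE !ffunE; case: eqP.
by rewrite cardsU1 inE ffunE eqxx.
Qed.

Lemma divMr (x y q : R) : q != 0 -> (x * q) / (y * q) = x / y.
Proof. by move=> hq; rewrite invfM mulrACA mulfV ?mulr1. Qed.

Lemma Z_gt0 (mu : {ffun bconf V -> R}) (theta : R) : is_distr mu -> 0 < theta ->
  0 < \sum_t mu t * theta ^+ ones t.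
Proof.
case=> hmu hs ht; rewrite lt_neqAle sumr_ge0 ?andbT; last first.
  by move=> t _; rewrite mulr_ge0 // exprn_ge0 // ltW.
apply/eqP => /esym/eqP; rewrite psumr_eq0 => [/allP H|t _]; last first.
  by rewrite mulr_ge0 // exprn_ge0 // ltW.
move: hs; rewrite big1 => [/eqP|t _]; first by rewrite eq_sym oner_eq0.
have /eqP := H t (mem_index_enum t).
by move/eqP; rewrite mulf_eq0 expf_eq0 (gt_eqF ht) andbF orbF => /eqP. Qed.

Lemma tilt_condE (mu : {ffun bconf V -> R}) (theta : R) i s b :
  is_distr mu -> 0 < theta ->
  tilt_cond mu theta i s b =
  (if b then theta * mu (updb s i true) else mu (updb s i false)) /
  (mu (updb s i false) + theta * mu (updb s i true)).
Proof.
move=> hmu ht.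
set q := theta ^+ ones (updb s i false) / \sum_t mu t * theta ^+ ones t.
have hq : q != 0.
  by rewrite /q mulf_neq0 ?invr_eq0 ?expf_neq0 // gt_eqF // Z_gt0.
have key : forall b, tilt mu theta (updb s i b) =
   (if b then theta * mu (updb s i true) else mu (updb s i false)) * q.
  by case; rewrite /tilt /q ?ones_upd ?exprS; ring.
rewrite /tilt_cond big_bool /= !key -mulrDl addrC divMr //.
Qed.


Lemma push_sum (nu : {ffun sconf V -> R}) (P : sconf V -> sconf V -> R) (f : sconf V -> R) :
  \sum_Y push nu P Y * f Y = \sum_X nu X * \sum_Y P X Y * f Y.
Proof.
rewrite /push; under eq_bigr do rewrite mulr_suml.
rewrite exchange_big; apply: eq_bigr => X _; rewrite mulr_sumr.
by apply: eq_bigr => Y _; rewrite mulrA.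
Qed.

Lemma g1E (mu : {ffun bconf V -> R}) (theta : R) i Y (f : sconf V -> R) :
  \sum_Z P_piGD mu theta i Y Z * f Z =
  \sum_c piL mu theta (upds Y i c) / (\sum_c' piL mu theta (upds Y i c')) * f (upds Y i c).
Proof.
rewrite -(sum_fiber i Y (fun Z => piL mu theta Z / (\sum_c piL mu theta (upds Y i c)) * f Z)).
by apply: eq_bigr => Z _; rewrite /P_piGD; case: ifP; rewrite ?mul0r.
Qed.

Lemma g2E_star (mu : {ffun bconf V -> R}) (theta : R) i Y (f : sconf V -> R) :
  Y i = sStar -> \sum_Z P_sGD mu theta i Y Z * f Z = f Y.
Proof.
move=> h; rewrite /P_sGD h eqxx (bigD1 Y) //= eqxx mul1r big1 ?addr0 // => Z /negbTE ->.
by rewrite mul0r.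
Qed.

Lemma g2E (mu : {ffun bconf V -> R}) (theta : R) i Y (f : sconf V -> R) :
  Y i != sStar -> \sum_Z P_sGD mu theta i Y Z * f Z =
  \sum_c (if c != sStar then tilt_cond mu theta i (contr Y) (c != sZero) else 0) * f (upds Y i c).
Proof.
move=> h.
pose G := fun Z : sconf V => (if Z i != sStar then tilt_cond mu theta i (contr Y) (Z i != sZero) else 0) * f Z.
transitivity (\sum_c G (upds Y i c)); last first.
  by apply: eq_bigr => c _; rewrite /G upds_i.
etransitivity; last exact: (sum_fiber i Y G).
apply: eq_bigr => Z _; rewrite /P_sGD (negbTE h).
by case: (agree_off i Y Z) => /=; rewrite ?mul0r.
Qed.

Lemma sle_upds X i (c c' : 'I_3) : (c <= c')%N -> sle (upds X i c) (upds X i c').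
Proof. by move=> h v; rewrite !ffunE; case: eqP. Qed.

End Proof.

Theorem lemma7p1 (R : realType) (V : finType)
  (mu : {ffun bconf V -> R}) (theta : R) :
  is_distr mu -> 0 < theta < 1 ->
  forall (i : V) (nu : {ffun sconf V -> R}),
    is_distr nu ->
    (forall X, piL mu theta X = 0 -> nu X = 0) ->
    (forall X Y, 0 < piL mu theta X -> 0 < piL mu theta Y -> sle X Y ->
       nu X / piL mu theta X <= nu Y / piL mu theta Y) ->
    sd_le (push nu (P_piGD mu theta i)) (push nu (P_sGD mu theta i)).
Proof.
move=> hmu hth i nu hnu hsupp hmono f hf0 hfmono.
rewrite !push_sum -(ler_pM2l (_ : 0 < 3%:R)) ?ltr0n // -!(sum_fiber_all i).
apply: ler_sum => X _.
under eq_bigr do rewrite g1E.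
under eq_bigr do under eq_bigr do rewrite !upds_upds.
under eq_bigr do under eq_bigr do under eq_bigr do rewrite !upds_upds.
rewrite !sum3.
rewrite (@g2E_star _ _ mu theta i (upds X i sStar) f) ?upds_i //.
rewrite (@g2E _ _ mu theta i (upds X i sZero) f) ?upds_i // (@g2E _ _ mu theta i (upds X i sOne) f) ?upds_i //.
have ht0 : 0 < theta by case/andP: hth.
rewrite !sum3 !upds_upds /= !contr_upds !tilt_condE // !updb_updb /=.
rewrite !mul0r !addr0.
set m0 := mu (updb (contr X) i false).
set m1 := mu (updb (contr X) i true).
have Kpos : 0 < \prod_(v | v != i) w theta (X v).
  by apply: prodr_gt0 => v _; apply: w_gt0.
have Knz : \prod_(v | v != i) w theta (X v) != 0 by rewrite gt_eqF.
have pE : forall c, piL mu theta (upds X i c) = mu (updb (contr X) i (c != sZero)) * (w theta c * \prod_(v | v != i) w theta (X v)).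
  by move=> c; rewrite piL_upds.
have e0 : m0 / (m0 + theta * m1) = piL mu theta (upds X i sZero) / (piL mu theta (upds X i sZero) + piL mu theta (upds X i sOne)).
  rewrite !pE /= w0 w1 -(divMr m0 (m0 + theta * m1) Knz); congr (_ / _); rewrite /m0 /m1; ring.
have e1 : theta * m1 / (m0 + theta * m1) = piL mu theta (upds X i sOne) / (piL mu theta (upds X i sZero) + piL mu theta (upds X i sOne)).
  rewrite !pE /= w0 w1 -(divMr (theta * m1) (m0 + theta * m1) Knz); congr (_ / _); rewrite /m0 /m1; ring.
rewrite e0 e1.
have pge0 : forall Y, 0 <= piL mu theta Y.
  move=> Y; rewrite piLE mulr_ge0 //; first by case: hmu.
  by apply: prodr_ge0 => v _; apply: ltW; apply: w_gt0.
case: hnu => hnu0 _.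
apply: alg => //.
- by apply: hsupp.
- by apply: hsupp.
- by apply: hsupp.
- by move=> h1 h2; apply: hmono => //; apply: sle_upds.
- by move=> h1 h2; apply: hmono => //; apply: sle_upds.
- by apply: hfmono; apply: sle_upds.
- by apply: hfmono; apply: sle_upds.
Qed.
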